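(* Let $$\Pi_0(\phi)=2\sum_{n=1}^{\infty}\frac{(-1)^{n-1}}{n^3\binom{2n}{n}}\,\phi^{n-1}=1-\frac{\phi}{24}+\frac{\phi^2}{270}+\cdots,$$ a power series converging on the disc $|\phi|<4$. Then $\Pi_0$ satisfies the ordinary differential equation $$\Big((4+\phi)\vartheta^4+(10+4\phi)\vartheta^3+(8+6\phi)\vartheta^2+(2+4\phi)\vartheta+\phi\Big)\Pi_0(\phi)=0,$$ where $\vartheta=\phi\,\frac{d}{d\phi}$.
   Context: $\binom{2n}{n}$ denotes the central binomial coefficient. The operator $\vartheta=\phi\frac{d}{d\phi}$ is the Euler derivative, and $\vartheta^k$ denotes its $k$-fold iterate. *)

(* Defs.v *)
From Stdlib Require Import Reals ClassicalEpsilon.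
From Coquelicot Require Import Coquelicot.
Open Scope C_scope.

Definition central_binom (n : nat) : R := Binomial.C (2 * n) n.

(* coefficient of phi^m in Pi_0 (i.e. n = m+1 in the paper's sum):
   2 (-1)^(n-1) / (n^3 binom(2n,n)) *)
Definition Pi0_coef (m : nat) : C :=
  RtoC (2 * (-1) ^ m / ((INR (S m)) ^ 3 * central_binom (S m)))%R.

(* the sum of the power series (chosen classically; meaningful where it converges) *)
Definition Pi0 (phi : C) : C :=
  epsilon (inhabits (RtoC 0)) (fun l => is_series (fun m => Pi0_coef m * phi ^ m) l).

(* complex derivative of f at z (chosen classically; meaningful where f is differentiable) *)
Definition CDerive (f : C -> C) (z : C) : C :=
  epsilon (inhabits (RtoC 0)) (fun l => is_derive f z l).

Definition theta (f : C -> C) : C -> C := fun phi => phi * CDerive f phi.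
Fixpoint theta_n (k : nat) (f : C -> C) : C -> C :=
  match k with O => f | S k => theta (theta_n k f) end.

(* Main.v *)
Require Import Defs.
From Stdlib Require Import Reals Lra Lia ClassicalEpsilon.
From Coquelicot Require Import Coquelicot.
Open Scope C_scope.

Open Scope R_scope.
Definition ar (m : nat) : R := 2 * (-1) ^ m / ((INR (S m)) ^ 3 * central_binom (S m)).

Lemma cb_pos n : 0 < central_binom n.
Proof.
  unfold central_binom, Binomial.C. apply Rdiv_lt_0_compat.
  apply INR_fact_lt_0. apply Rmult_lt_0_compat; apply INR_fact_lt_0.
Qed.

Lemma cb_rec m : central_binom (S (S m)) =
  central_binom (S m) * (2 * (2 * INR m + 3)) / (INR m + 2).
Proof.
  unfold central_binom, Binomial.C.
  replace (2 * S (S m) - S (S m))%nat with (S (S m)) by lia.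
  replace (2 * S m - S m)%nat with (S m) by lia.
  replace (2 * S (S m))%nat with (S (S (2 * S m))) by lia.
  rewrite (fact_simpl (S (2 * S m))), (fact_simpl (2 * S m)).
  rewrite (fact_simpl (S m)).
  rewrite !mult_INR.
  replace (INR (S (S (2 * S m)))) with (2 * INR m + 4) by
    (replace (S (S (2 * S m))) with (m + m + 4)%nat by lia; rewrite !plus_INR; simpl; ring).
  replace (INR (S (2 * S m))) with (2 * INR m + 3) by
    (replace (S (2 * S m)) with (m + m + 3)%nat by lia; rewrite !plus_INR; simpl; ring).
  replace (INR (S (S m))) with (INR m + 2) by (rewrite !S_INR; ring).
  pose proof (INR_fact_lt_0 (2 * S m)). pose proof (INR_fact_lt_0 (S m)).
  pose proof (pos_INR m).
  field. lra.
Qed.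

Lemma ar_rec m : ar (S m) =
  - (INR m + 1) ^ 3 / (2 * (INR m + 2) ^ 2 * (2 * INR m + 3)) * ar m.
Proof.
  unfold ar. rewrite cb_rec. pose proof (cb_pos (S m)). pose proof (pos_INR m).
  rewrite !S_INR. simpl pow. field. lra.
Qed.

Lemma ar_0 : ar 0 = 1.
Proof. unfold ar, central_binom, Binomial.C. simpl. field. Qed.

Lemma ar_bound m : Rabs (ar m) <= (/ 4) ^ m.
Proof.
  induction m.
  - rewrite ar_0. simpl. rewrite Rabs_R1. lra.
  - rewrite ar_rec, Rabs_mult. change ((/4)^(S m)) with (/4 * (/4)^m).
    pose proof (pos_INR m) as Hm. set (x := INR m) in *.
    set (D := 2 * (x + 2) ^ 2 * (2 * x + 3)).
    assert (HD : 0 < D) by (unfold D; apply Rmult_lt_0_compat; [apply Rmult_lt_0_compat; [lra| apply pow_lt; lra]|lra]).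
    assert (Hq : Rabs (- (x + 1) ^ 3 / D) <= / 4).
    { unfold Rdiv. rewrite <- Ropp_mult_distr_l, Rabs_Ropp, Rabs_pos_eq.
      - apply (Rmult_le_reg_r D); [lra|].
        replace ((x + 1) ^ 3 * / D * D) with ((x+1)^3) by (field; lra).
        replace D with (4*(x+1)^3 + (10*x*x + 28*x + 20)) by (unfold D; ring).
        assert (0 <= x * x) by (apply Rmult_le_pos; lra). lra.
      - apply Rmult_le_pos. apply pow_le. lra. apply Rlt_le, Rinv_0_lt_compat. lra. }
    pose proof (Rabs_pos (ar m)).
    pose proof (Rabs_pos (- (x + 1) ^ 3 / D)).
    apply Rle_trans with (/4 * Rabs (ar m)).
    + apply Rmult_le_compat_r; lra.
    + apply Rmult_le_compat_l; lra.
Qed.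

Open Scope C_scope.
Lemma is_series_C_unique (a : nat -> C) l1 l2 :
  is_series a l1 -> is_series a l2 -> l1 = l2.
Proof.
  intros H1 H2. unfold is_series in *.
  exact (filterlim_locally_unique _ _ _ H1 H2).
Qed.

Lemma series_norm_le (a : nat -> C) (b : nat -> R) la lb :
  is_series a la -> is_series b lb -> (forall n, Cmod (a n) <= b n)%R ->
  (Cmod la <= lb)%R.
Proof.
  intros Ha Hb Hab.
  assert (H1 : filterlim (fun n => norm (sum_n a n)) eventually (locally (norm la))).
  { eapply filterlim_comp. exact Ha. apply filterlim_norm. }
  pose proof (filterlim_le (F := eventually) (fun n => norm (sum_n a n)) (sum_n b)
     (norm la) lb) as HH.
  assert (Hev : eventually (fun n => norm (sum_n a n) <= sum_n b n)).
  { exists 0%nat. intros n _. unfold sum_n.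
    eapply Rle_trans. apply (norm_sum_n_m (K:=C_AbsRing) (V:=C_NormedModule)).
    apply sum_n_m_le. intros k. change (Cmod (a k) <= b k). apply Hab. }
  assert (HR := HH Hev H1 Hb). simpl in HR. change (Cmod la <= lb). exact HR.
Qed.

Definition Hc (c : nat -> C) := forall r : R, (0 < r < 4)%R ->
  ex_series (fun m => Cmod (c m) * r ^ m)%R.

Definition PS (c : nat -> C) (z : C) : C :=
  epsilon (inhabits (RtoC 0)) (fun l => is_series (fun m => c m * z ^ m) l).

Lemma PS_spec c z : ex_series (fun m => c m * z ^ m) -> is_series (fun m => c m * z ^ m) (PS c z).
Proof.
  intros [l Hl]. unfold PS. apply (epsilon_spec (inhabits (RtoC 0)) (fun l => is_series (fun m => c m * z ^ m) l)).
  exists l; exact Hl.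
Qed.

Lemma PS_ex c z : Hc c -> (Cmod z < 4)%R -> ex_series (fun m => c m * z ^ m).
Proof.
  intros H Hz. pose proof (Cmod_ge_0 z).
  apply (ex_series_le (K := C_AbsRing) (V := C_CompleteNormedModule) _ (fun m => Cmod (c m) * ((Cmod z + 4)/2) ^ m)%R).
  - intros n. change (Cmod (c n * z ^ n) <= Cmod (c n) * ((Cmod z + 4) / 2) ^ n)%R.
    rewrite Cmod_mult, Cmod_pow. apply Rmult_le_compat_l. apply Cmod_ge_0.
    apply pow_incr. lra.
  - apply H. lra.
Qed.

Lemma bernoulli (e : R) (m : nat) : (0 <= e)%R -> (1 + INR m * e <= (1 + e) ^ m)%R.
Proof.
  intros He. induction m.
  - simpl. lra.
  - rewrite S_INR. simpl pow.
    assert (0 <= INR m * e * e)%R by (apply Rmult_le_pos; [apply Rmult_le_pos; [apply pos_INR|lra]|lra]).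
    nra.
Qed.

Lemma Cmod_INR (m : nat) : Cmod (RtoC (INR m)) = INR m.
Proof. rewrite Cmod_R. apply Rabs_pos_eq, pos_INR. Qed.

Lemma Hc_mul c : Hc c -> Hc (fun m => RtoC (INR m) * c m).
Proof.
  intros H r Hr.
  set (s := ((r + 4) / 2)%R). set (e := ((4 - r) / (2 * r))%R).
  assert (He : (0 < e)%R) by (unfold e; apply Rdiv_lt_0_compat; lra).
  assert (Hs : ((1 + e) * r = s)%R) by (unfold s, e; field; lra).
  apply (ex_series_le (K := R_AbsRing) (V := R_CompleteNormedModule) _ (fun m => / e * (Cmod (c m) * s ^ m))%R).
  - intros n. rewrite Cmod_mult, Cmod_INR.
    change (Rabs (INR n * Cmod (c n) * r ^ n) <= / e * (Cmod (c n) * s ^ n))%R.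
    rewrite Rabs_pos_eq.
    2: { apply Rmult_le_pos. apply Rmult_le_pos. apply pos_INR. apply Cmod_ge_0. apply pow_le. lra. }
    pose proof (bernoulli e n (Rlt_le _ _ He)) as HB.
    pose proof (Cmod_ge_0 (c n)).
    assert (Hrn : (0 < r ^ n)%R) by (apply pow_lt; lra).
    assert (INR n * e * r ^ n <= s ^ n)%R.
    { rewrite <- Hs, Rpow_mult_distr. nra. }
    apply (Rmult_le_reg_l e); [lra|].
    replace (e * (/ e * (Cmod (c n) * s ^ n)))%R with (Cmod (c n) * s ^ n)%R by (field; lra).
    nra.
  - exact (ex_series_scal (K := R_AbsRing) (V := R_NormedModule) (/ e)%R _ (H s ltac:(unfold s; lra))).
Qed.

Definition err (z h : C) (m : nat) : C :=
  (z + h) ^ m - z ^ m - RtoC (INR m) * h * z ^ (pred m).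

Lemma err_rec z h m : err z h (S m) = (z + h) * err z h m + RtoC (INR m) * (h * h) * z ^ (pred m).
Proof.
  unfold err. destruct m.
  - simpl. ring.
  - simpl pred. rewrite (S_INR (S m)), RtoC_plus. simpl Cpow. ring.
Qed.

Lemma err_bound z h r m : (0 < r)%R -> (Cmod z <= r)%R -> (Cmod (z + h) <= r)%R ->
  (r ^ 2 * Cmod (err z h m) <= INR m ^ 2 * Cmod h ^ 2 * r ^ m)%R.
Proof.
  intros Hr Hz Hzh. induction m.
  - unfold err. simpl. rewrite Rmult_0_l, Rmult_0_l.
    replace (1 - 1 - RtoC 0 * h * 1) with (RtoC 0) by (unfold RtoC; apply injective_projections; simpl; ring).
    rewrite Cmod_0. lra.
  - rewrite err_rec.
    pose proof (Cmod_triangle ((z + h) * err z h m) (RtoC (INR m) * (h * h) * z ^ pred m)) as T.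
    rewrite !Cmod_mult, Cmod_INR, Cmod_pow in T.
    pose proof (Cmod_ge_0 h). pose proof (Cmod_ge_0 z). pose proof (Cmod_ge_0 (err z h m)).
    pose proof (pos_INR m) as Hm.
    set (a := Cmod h) in *. set (E := Cmod (err z h m)) in *.
    assert (T2 : (INR m * (a * a) * Cmod z ^ pred m * r ^ 2 <= INR m * a ^ 2 * r ^ S m)%R).
    { destruct m.
      - simpl. lra.
      - simpl pred. replace (INR (S m) * a ^ 2 * r ^ S (S m))%R with (INR (S m) * (a * a) * r ^ m * r ^ 2)%R by (simpl; ring).
        apply Rmult_le_compat_r. apply pow_le; lra.
        apply Rmult_le_compat_l. apply Rmult_le_pos. apply pos_INR. apply Rmult_le_pos; lra.
        apply pow_incr; lra. }
    assert (T1 : (Cmod (z + h) * E * r ^ 2 <= r * (INR m ^ 2 * a ^ 2 * r ^ m))%R).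
    { rewrite Rmult_assoc. apply Rmult_le_compat.
      - apply Cmod_ge_0.
      - apply Rmult_le_pos; [lra|apply pow_le; lra].
      - exact Hzh.
      - rewrite Rmult_comm. exact IHm. }
    rewrite S_INR.
    assert (Hrm : (0 <= r ^ S m)%R) by (apply pow_le; lra).
    assert (HX : (0 <= INR m * a ^ 2 * r ^ S m)%R) by (apply Rmult_le_pos; [apply Rmult_le_pos; [lra|apply pow_le; lra]|lra]).
    assert (Hr2 : (0 < r ^ 2)%R) by (apply pow_lt; lra).
    apply Rle_trans with (r ^ 2 * (Cmod (z + h) * E + INR m * (a * a) * Cmod z ^ pred m))%R.
    + apply Rmult_le_compat_l; lra.
    + replace (r * (INR m ^ 2 * a ^ 2 * r ^ m))%R with (INR m ^ 2 * a ^ 2 * r ^ S m)%R in T1 by (simpl; ring).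
      assert (0 <= INR m * a ^ 2 * r ^ S m)%R by exact HX.
      replace ((INR m + 1) ^ 2 * a ^ 2 * r ^ S m)%R with
        (INR m ^ 2 * a ^ 2 * r ^ S m + 2 * (INR m * a ^ 2 * r ^ S m) + a ^ 2 * r ^ S m)%R by ring.
      assert (0 <= a ^ 2 * r ^ S m)%R by (apply Rmult_le_pos; [apply pow_le; lra|lra]).
      lra.
Qed.

Lemma Hc_shift c : Hc (fun m => RtoC (INR m) * c m) -> Hc (fun m => RtoC (INR (S m)) * c (S m)).
Proof.
  intros H r Hr. pose proof (H r Hr) as H1.
  apply (ex_series_incr_1 (K := R_AbsRing) (V := R_NormedModule)) in H1.
  pose proof (ex_series_scal (K := R_AbsRing) (V := R_NormedModule) (/ r)%R _ H1) as H2.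
  eapply ex_series_ext; [|exact H2].
  intros n. change (/ r * (Cmod (INR (S n) * c (S n)) * r ^ S n) = Cmod (INR (S n) * c (S n)) * r ^ n)%R.
  simpl pow. field. lra.
Qed.

Lemma Csub_aux (y z : C) : y = z + (y - z).
Proof. ring. Qed.

Lemma PS_derive c z : Hc c -> (Cmod z < 4)%R ->
  is_derive (PS c) z (PS (fun m => RtoC (INR (S m)) * c (S m)) z).
Proof.
  intros H Hz.
  set (dc := fun m => RtoC (INR (S m)) * c (S m)).
  set (D := PS dc z).
  assert (H1 := Hc_mul c H). assert (H2 := Hc_mul _ H1).
  assert (Hdc : Hc dc) by (apply Hc_shift; exact H1).
  assert (HD0 : is_series (fun m => dc m * z ^ m) D) by (apply PS_spec, PS_ex; assumption).
  assert (HD : is_series (fun m => c m * (RtoC (INR m) * z ^ (pred m))) D).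
  { apply is_series_decr_1.
    match goal with |- is_series _ ?l => replace l with D end.
    - eapply is_series_ext; [|exact HD0]. intros n. unfold dc. simpl pred. match goal with |- ?a = ?b => change (@eq C a b) end. ring.
    - change (D = D + - (c 0%nat * (RtoC 0 * 1))).
      replace (RtoC 0) with (Cmult 0 0) by (apply injective_projections; simpl; ring). ring. }
  pose proof (Cmod_ge_0 z) as Hz0.
  set (r := ((Cmod z + 4) / 2)%R).
  assert (Hr : (0 < r < 4)%R) by (unfold r; lra).
  destruct (H2 r Hr) as [K HK].
  assert (HK0 : (0 <= K)%R).
  { assert (Cmod (0 * D) <= K)%R.
    { apply (series_norm_le _ _ _ K
        (is_series_scal (K := C_AbsRing) (V := C_NormedModule) (RtoC 0) _ _ HD) HK).
      intros n. change (Cmod (0 * (c n * (INR n * z ^ pred n))) <= Cmod (INR n * (INR n * c n)) * r ^ n)%R.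
      rewrite Cmod_mult, Cmod_0, Rmult_0_l. apply Rmult_le_pos. apply Cmod_ge_0. apply pow_le; lra. }
    rewrite Cmod_mult, Cmod_0, Rmult_0_l in H0. exact H0. }
  split.
  { apply is_linear_scal_l. }
  intros x Hx. assert (Hzx : z = x) by (apply (is_filter_lim_locally_unique (K := C_AbsRing) (V := AbsRing_NormedModule C_AbsRing)); exact Hx). subst x.
  intros eps.
  apply (locally_norm_le_locally (K:=C_AbsRing) (V:=AbsRing_NormedModule C_AbsRing)).
  assert (Hd : (0 < Rmin ((4 - Cmod z) / 2) (eps * r ^ 2 / (K + 1)))%R).
  { apply Rmin_pos. lra. apply Rdiv_lt_0_compat. apply Rmult_lt_0_compat. apply cond_pos. apply pow_lt; lra. lra. }
  exists (mkposreal _ Hd). intros y Hy.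
  change (Cmod (y - z) < Rmin ((4 - Cmod z) / 2) (eps * r ^ 2 / (K + 1)))%R in Hy.
  change (Cmod (PS c y - PS c z - (y - z) * D) <= eps * Cmod (y - z))%R.
  set (h := y - z) in *.
  assert (Hyzh : @eq C y (z + h)) by (unfold h; apply Csub_aux).
  pose proof (Rmin_l ((4 - Cmod z) / 2) (eps * r ^ 2 / (K + 1))) as Hm1.
  pose proof (Rmin_r ((4 - Cmod z) / 2) (eps * r ^ 2 / (K + 1))) as Hm2.
  assert (Hyr : (Cmod (z + h) <= r)%R).
  { pose proof (Cmod_triangle z h). unfold r. lra. }
  assert (Hy4 : (Cmod y < 4)%R) by (rewrite Hyzh; unfold r in Hyr; lra).
  assert (Hsy := PS_spec c y (PS_ex c y H Hy4)).
  assert (Hsz := PS_spec c z (PS_ex c z H Hz)).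
  assert (Hser : is_series (fun m => c m * err z h m) (PS c y - PS c z - h * D)).
  { pose proof (is_series_minus _ _ _ _ Hsy Hsz) as S1.
    pose proof (is_series_scal (K := C_AbsRing) (V := C_NormedModule) h _ _ HD) as S2.
    pose proof (is_series_minus _ _ _ _ S1 S2) as S3.
    eapply is_series_ext; [|exact S3].
    intros n. change (c n * y ^ n + - (c n * z ^ n) + - (h * (c n * (RtoC (INR n) * z ^ pred n))) = c n * err z h n).
    unfold err. rewrite Hyzh. ring. }
  set (q := (Cmod h ^ 2 / r ^ 2)%R).
  assert (Hr2 : (0 < r ^ 2)%R) by (apply pow_lt; lra).
  assert (Hq : (0 <= q)%R) by (unfold q; apply Rdiv_le_0_compat; [apply pow_le, Cmod_ge_0|lra]).
  assert (HqK : is_series (fun m => q * (Cmod (RtoC (INR m) * (RtoC (INR m) * c m)) * r ^ m))%R (q * K)%R).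
  { exact (is_series_scal (K := R_AbsRing) (V := R_NormedModule) q _ _ HK). }
  assert (Hb : (Cmod (PS c y - PS c z - h * D) <= q * K)%R).
  { apply (series_norm_le _ _ _ _ Hser HqK).
    intros n. rewrite !Cmod_mult, !Cmod_INR.
    assert (Hzr : (Cmod z <= r)%R) by (unfold r; lra).
    pose proof (err_bound z h r n (proj1 Hr) Hzr Hyr) as EB.
    pose proof (Cmod_ge_0 (c n)) as Hc0.
    assert (EB2 : (Cmod (err z h n) <= INR n ^ 2 * Cmod h ^ 2 * r ^ n / r ^ 2)%R).
    { apply (Rmult_le_reg_l (r ^ 2)); [lra|].
      replace (r ^ 2 * (INR n ^ 2 * Cmod h ^ 2 * r ^ n / r ^ 2))%R with (INR n ^ 2 * Cmod h ^ 2 * r ^ n)%R by (field; lra).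
      exact EB. }
    replace (q * (INR n * (INR n * Cmod (c n)) * r ^ n))%R with
      (Cmod (c n) * (INR n ^ 2 * Cmod h ^ 2 * r ^ n / r ^ 2))%R by (unfold q; field; lra).
    apply Rmult_le_compat_l; assumption. }
  pose proof (Cmod_ge_0 h) as Ha0.
  set (a := Cmod h) in *.
  pose proof (cond_pos eps) as He.
  assert (HaK : (a * K <= eps * r ^ 2)%R).
  { apply Rle_trans with (eps * r ^ 2 / (K + 1) * K)%R.
    - apply Rmult_le_compat_r; lra.
    - apply (Rmult_le_reg_r (K + 1)); [lra|].
      replace (eps * r ^ 2 / (K + 1) * K * (K + 1))%R with (eps * r ^ 2 * K)%R by (field; lra).
      assert (0 < eps * r ^ 2)%R by (apply Rmult_lt_0_compat; lra). nra. }
  replace (q * K)%R with (a * (a * K) / r ^ 2)%R in Hb by (unfold q; field; lra).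
  apply Rle_trans with (1 := Hb).
  apply Rle_trans with (a * (eps * r ^ 2) / r ^ 2)%R.
  - unfold Rdiv. apply Rmult_le_compat_r. apply Rlt_le, Rinv_0_lt_compat; lra.
    apply Rmult_le_compat_l; lra.
  - right. field. lra.
Qed.

Lemma ser_scal (a : nat -> C) l x : is_series a l -> is_series (fun m => x * a m) (x * l).
Proof. intros H. exact (is_series_scal (K:=C_AbsRing) (V:=C_NormedModule) x a l H). Qed.

Lemma ser_add (a b : nat -> C) la lb : is_series a la -> is_series b lb ->
  is_series (fun m => a m + b m) (la + lb).
Proof. intros H1 H2. exact (is_series_plus (K:=C_AbsRing) (V:=C_NormedModule) a b la lb H1 H2). Qed.

Lemma PS_theta c z : Hc c -> (Cmod z < 4)%R ->
  z * PS (fun m => RtoC (INR (S m)) * c (S m)) z = PS (fun m => RtoC (INR m) * c m) z.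
Proof.
  intros H Hz.
  assert (H1 := Hc_mul c H). assert (Hdc := Hc_shift c H1).
  pose proof (ser_scal _ _ z (PS_spec _ _ (PS_ex _ _ Hdc Hz))) as S1.
  pose proof (PS_spec _ _ (PS_ex _ _ H1 Hz)) as S2.
  apply (is_series_C_unique (fun m => RtoC (INR m) * c m * z ^ m)); [|exact S2].
  apply is_series_decr_1.
  match goal with |- is_series _ ?l => replace l with (z * PS (fun m => RtoC (INR (S m)) * c (S m)) z) end.
  - eapply is_series_ext; [|exact S1]. intros n. simpl Cpow.
    match goal with |- ?a = ?b => change (@eq C a b) end. cbv beta. ring.
  - change (z * PS (fun m => RtoC (INR (S m)) * c (S m)) z =
            z * PS (fun m => RtoC (INR (S m)) * c (S m)) z + - (RtoC (INR 0) * c 0%nat * z ^ 0)).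
    simpl INR. replace (RtoC 0) with (Cmult 0 0) by (apply injective_projections; simpl; ring). ring.
Qed.

Fixpoint cs (k : nat) : nat -> C :=
  match k with O => Pi0_coef | S k => fun m => RtoC (INR m) * cs k m end.

Lemma Hc_Pi0 : Hc Pi0_coef.
Proof.
  intros r Hr.
  apply (ex_series_le (K := R_AbsRing) (V := R_CompleteNormedModule) _ (fun m => (r * / 4) ^ m)%R).
  - intros n. change (Pi0_coef n) with (RtoC (ar n)).
    change (Rabs (Cmod (ar n) * r ^ n) <= (r * / 4) ^ n)%R.
    rewrite Cmod_R, Rabs_pos_eq.
    + rewrite Rpow_mult_distr, Rmult_comm. apply Rmult_le_compat_l. apply pow_le; lra. apply ar_bound.
    + apply Rmult_le_pos. apply Rabs_pos. apply pow_le; lra.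
  - apply ex_series_geom. rewrite Rabs_pos_eq; lra.
Qed.

Lemma Hc_cs k : Hc (cs k).
Proof. induction k. exact Hc_Pi0. simpl. apply Hc_mul. exact IHk. Qed.

Lemma locally_disc z : (Cmod z < 4)%R ->
  @locally (AbsRing_UniformSpace C_AbsRing) z (fun t => (Cmod t < 4)%R).
Proof.
  intros Hz.
  apply (locally_norm_le_locally (K:=C_AbsRing) (V:=AbsRing_NormedModule C_AbsRing)).
  assert (Hd : (0 < 4 - Cmod z)%R) by lra.
  exists (mkposreal _ Hd). intros y Hy.
  change (Cmod (y - z) < 4 - Cmod z)%R in Hy.
  pose proof (Cmod_triangle z (y - z)) as T.
  rewrite <- (Csub_aux y z) in T. simpl in Hy. lra.
Qed.

Lemma CDerive_eq f z l : is_derive f z l -> CDerive f z = l.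
Proof.
  intros H. unfold CDerive.
  assert (H2 : is_derive f z (epsilon (inhabits (RtoC 0)) (fun l => is_derive f z l))).
  { apply (epsilon_spec (inhabits (RtoC 0)) (fun l => is_derive f z l)). exists l; exact H. }
  apply is_C_derive_unique in H. apply is_C_derive_unique in H2. congruence.
Qed.

Lemma theta_PS k : forall z, (Cmod z < 4)%R -> theta_n k Pi0 z = PS (cs k) z /\
  ((Cmod z < 4)%R -> is_derive (theta_n k Pi0) z (PS (fun m => RtoC (INR (S m)) * cs k (S m)) z)).
Proof.
  induction k.
  - intros z Hz. split. reflexivity.
    intros _. apply (PS_derive (cs 0) z (Hc_cs 0) Hz).
  - assert (Hd : forall z, (Cmod z < 4)%R -> is_derive (theta_n k Pi0) z (PS (fun m => RtoC (INR (S m)) * cs k (S m)) z)).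
    { intros z Hz. apply (is_derive_ext_loc (PS (cs k))).
      - eapply filter_imp; [|exact (locally_disc z Hz)].
        intros t Ht. symmetry. apply (IHk t Ht).
      - apply PS_derive. apply Hc_cs. exact Hz. }
    assert (He : forall z, (Cmod z < 4)%R -> theta_n (S k) Pi0 z = PS (cs (S k)) z).
    { intros z Hz. simpl. unfold theta. rewrite (CDerive_eq _ _ _ (Hd z Hz)).
      apply PS_theta. apply Hc_cs. exact Hz. }
    intros z Hz. split. apply He, Hz.
    intros _. apply (is_derive_ext_loc (PS (cs (S k)))).
    + eapply filter_imp; [|exact (locally_disc z Hz)].
      intros t Ht. symmetry. apply (He t Ht).
    + apply PS_derive. apply Hc_cs. exact Hz.
Qed.

Lemma key_R m :
  ((4 * INR (S m) ^ 4 + 10 * INR (S m) ^ 3 + 8 * INR (S m) ^ 2 + 2 * INR (S m)) * ar (S m)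
   + ((INR m ^ 4 + 4 * INR m ^ 3 + 6 * INR m ^ 2 + 4 * INR m) * ar m + ar m) = 0)%R.
Proof.
  rewrite ar_rec, S_INR. pose proof (pos_INR m). field. lra.
Qed.

Theorem mainTheorem1 :
  forall phi : C, (Cmod phi < 4)%R ->
    ex_series (fun m => Pi0_coef m * phi ^ m) /\
    (forall k : nat, (k < 4)%nat -> ex_derive (theta_n k Pi0) phi) /\
    (RtoC 4 + phi) * theta_n 4 Pi0 phi
    + (RtoC 10 + RtoC 4 * phi) * theta_n 3 Pi0 phi
    + (RtoC 8 + RtoC 6 * phi) * theta_n 2 Pi0 phi
    + (RtoC 2 + RtoC 4 * phi) * theta_n 1 Pi0 phi
    + phi * Pi0 phi = RtoC 0.
Proof.
  intros phi Hphi. split; [|split].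
  - exact (PS_ex _ _ Hc_Pi0 Hphi).
  - intros k _. eexists. exact (proj2 (theta_PS k phi Hphi) Hphi).
  - rewrite (proj1 (theta_PS 4 phi Hphi)), (proj1 (theta_PS 3 phi Hphi)),
      (proj1 (theta_PS 2 phi Hphi)), (proj1 (theta_PS 1 phi Hphi)).
    change (Pi0 phi) with (PS (cs 0) phi).
    assert (HP : forall k, is_series (fun m => cs k m * phi ^ m) (PS (cs k) phi)).
    { intros k. apply PS_spec, PS_ex. apply Hc_cs. exact Hphi. }
    set (A := RtoC 4 * PS (cs 4) phi + (RtoC 10 * PS (cs 3) phi + (RtoC 8 * PS (cs 2) phi + RtoC 2 * PS (cs 1) phi))).
    set (B := PS (cs 4) phi + (RtoC 4 * PS (cs 3) phi + (RtoC 6 * PS (cs 2) phi + (RtoC 4 * PS (cs 1) phi + PS (cs 0) phi)))).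
    pose proof (ser_add _ _ _ _ (ser_scal _ _ (RtoC 4) (HP 4%nat))
                 (ser_add _ _ _ _ (ser_scal _ _ (RtoC 10) (HP 3%nat))
                 (ser_add _ _ _ _ (ser_scal _ _ (RtoC 8) (HP 2%nat)) (ser_scal _ _ (RtoC 2) (HP 1%nat))))) as Su.
    fold A in Su.
    pose proof (ser_add _ _ _ _ (HP 4%nat)
                 (ser_add _ _ _ _ (ser_scal _ _ (RtoC 4) (HP 3%nat))
                 (ser_add _ _ _ _ (ser_scal _ _ (RtoC 6) (HP 2%nat))
                 (ser_add _ _ _ _ (ser_scal _ _ (RtoC 4) (HP 1%nat)) (HP 0%nat))))) as Sv.
    fold B in Sv.
    match type of Su with is_series ?u _ =>
      assert (E0 : plus A (u 0%nat) = A) end.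
    { change (A + (RtoC 4 * (cs 4 0%nat * phi ^ 0) + (RtoC 10 * (cs 3 0%nat * phi ^ 0) +
        (RtoC 8 * (cs 2 0%nat * phi ^ 0) + RtoC 2 * (cs 1 0%nat * phi ^ 0)))) = A).
      cbn [cs]. simpl INR. replace (RtoC 0) with (Cmult 0 0) by (apply injective_projections; simpl; ring). ring. }
    rewrite <- E0 in Su. apply (is_series_incr_1 (K:=C_AbsRing) (V:=C_NormedModule)) in Su.
    pose proof (ser_add _ _ _ _ Su (ser_scal _ _ phi Sv)) as Sw.
    pose proof (ser_scal _ _ (RtoC 0) (HP 0%nat)) as Sz.
    assert (Hfin : A + phi * B = RtoC 0 * PS (cs 0) phi).
    { apply (is_series_C_unique _ _ _ Sw). eapply is_series_ext; [|exact Sz].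
      intros m. cbv beta. match goal with |- ?a = ?b => change (@eq C a b) end.
      transitivity (phi ^ (S m) * RtoC
        ((4 * INR (S m) ^ 4 + 10 * INR (S m) ^ 3 + 8 * INR (S m) ^ 2 + 2 * INR (S m)) * ar (S m)
        + ((INR m ^ 4 + 4 * INR m ^ 3 + 6 * INR m ^ 2 + 4 * INR m) * ar m + ar m))%R).
      - rewrite key_R. replace (RtoC 0) with (Cmult 0 0) by (apply injective_projections; simpl; ring). ring.
      - cbn [cs]. change (Pi0_coef m) with (RtoC (ar m)). change (Pi0_coef (S m)) with (RtoC (ar (S m))).
        repeat (rewrite RtoC_plus || rewrite RtoC_mult || rewrite RtoC_pow).
        change (phi ^ S m) with (phi * phi ^ m). ring. }
    assert (Hfin2 : A + phi * B = 0 * 0).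
    { rewrite Hfin. replace (RtoC 0) with (Cmult 0 0) by (apply injective_projections; simpl; ring). ring. }
    replace (RtoC 0) with (Cmult 0 0) by (apply injective_projections; simpl; ring).
    rewrite <- Hfin2. unfold A, B. ring.
Qed.
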